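(* Let $\mathcal{F}$ be a saturated fusion system on a finite $p$-group $P$, and let $Q\le P$ be $\mathcal{F}$-essential of rank $r$. Then $\mathrm{Out}_{\mathcal{F}}(Q)\cong\mathrm{Aut}_{\mathcal{F}}(Q/\Phi(Q))\le\mathrm{GL}(r,p)$ and $|\mathrm{N}_P(Q)/Q|\le p^{r(r-1)/2}$. Moreover $\mathrm{N}_P(Q)/Q$ has nilpotency class at most $r-1$ and exponent at most $p^{\lceil\log_p r\rceil}$. In particular $|\mathrm{N}_P(Q)/Q|=p$ if $r=2$.
   Context: Rank of a $p$-group $Q$: $r$ with $|Q:\Phi(Q)|=p^r$. $\mathrm{Aut}_{\mathcal{F}}(Q/\Phi(Q))$ denotes the image of $\mathrm{Aut}_{\mathcal{F}}(Q)$ in $\mathrm{Aut}(Q/\Phi(Q))$. A subgroup $Q\le P$ is $\mathcal{F}$-essential if (i) it is fully $\mathcal{F}$-normalized, (ii) $\mathcal{F}$-centric, (iii) $\mathrm{Out}_{\mathcal{F}}(Q)=\mathrm{Aut}_{\mathcal{F}}(Q)/\mathrm{Inn}(Q)$ contains a strongly $p$-embedded subgroup $H$ ($p\mid|H|$, $p\nmid|\mathrm{Out}_{\mathcal{F}}(Q):H|>1$, $p\nmid|H\cap{}^xH|$ for $x\notin H$). *)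

(* Defs.v *)
From HB Require Import structures.
From mathcomp Require Import all_boot all_fingroup all_solvable all_algebra.
Set Implicit Arguments. Unset Strict Implicit. Unset Printing Implicit Defensive.
Local Open Scope group_scope.

(* A (candidate) fusion system on gT: [F Q f] means that the restriction of
   f to Q is a morphism of F with domain Q (and codomain P; any subgroup R
   containing f @: Q can serve as codomain, i.e. Hom_F(Q,R) is
   [set f | F Q f & f @: Q \subset R]). Values of f outside Q are irrelevant. *)
Definition fsys (gT : finGroupType) := {set gT} -> {ffun gT -> gT} -> bool.

Definition conjf (gT : finGroupType) (g : gT) : {ffun gT -> gT} := [ffun x => x ^ g].

Definition homF (gT : finGroupType) (F : fsys gT) (Q R : {set gT}) (f : {ffun gT -> gT}) :=
  F Q f && (f @: Q \subset R).

Record is_fusion_system (gT : finGroupType) (P : {group gT}) (F : fsys gT) : Prop := {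
  fs_dom : forall Q f, F Q f -> group_set Q && (Q \subset P);
  fs_morph : forall Q f, F Q f -> {in Q &, {morph f : x y / x * y}};
  fs_inj : forall Q f, F Q f -> {in Q &, injective f};
  fs_into : forall Q f, F Q f -> f @: Q \subset P;
  fs_ext : forall Q (f g : {ffun gT -> gT}), F Q f -> {in Q, f =1 g} -> F Q g;
  fs_conj : forall (Q : {group gT}) g, Q \subset P -> g \in P -> F Q (conjf g);
  fs_comp : forall Q R (f g : {ffun gT -> gT}), F Q f -> F R g -> f @: Q \subset R ->
              F Q [ffun x => g (f x)];
  (* every morphism is an F-isomorphism onto its image followed by an
     inclusion: the inverse isomorphism lies in F *)
  fs_inv : forall Q (f g : {ffun gT -> gT}), F Q f -> {in Q, cancel f g} -> F (f @: Q) g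
}.

Definition Fconj (gT : finGroupType) (F : fsys gT) (Q R : {set gT}) :=
  [exists f : {ffun gT -> gT}, F Q f && (f @: Q == R)].

Definition fully_normalized (gT : finGroupType) (P : {group gT}) (F : fsys gT) (Q : {set gT}) :=
  forall R : {set gT}, Fconj F Q R -> #|'N_P(R)| <= #|'N_P(Q)|.

Definition fully_centralized (gT : finGroupType) (P : {group gT}) (F : fsys gT) (Q : {set gT}) :=
  forall R : {set gT}, Fconj F Q R -> #|'C_P(R)| <= #|'C_P(Q)|.

Definition Fcentric (gT : finGroupType) (P : {group gT}) (F : fsys gT) (Q : {set gT}) :=
  forall R : {set gT}, Fconj F Q R -> 'C_P(R) \subset R.

(* Aut_F(Q), as a subset of Aut(Q) (automorphisms are permutations of gT
   supported on Q) *)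
Definition AutF (gT : finGroupType) (F : fsys gT) (Q : {group gT}) : {set {perm gT}} :=
  [set a in Aut Q | F Q [ffun x => a x]].

Definition AutP (gT : finGroupType) (P Q : {group gT}) : {set {perm gT}} :=
  conj_aut Q @* 'N_P(Q).
Definition Inn (gT : finGroupType) (Q : {group gT}) : {set {perm gT}} :=
  conj_aut Q @* Q.

Definition OutF (gT : finGroupType) (F : fsys gT) (Q : {group gT}) :=
  AutF F Q / Inn Q.

Definition Nphi (gT : finGroupType) (P Q : {group gT}) (f : {ffun gT -> gT}) : {set gT} :=
  [set g in 'N_P(Q) |
     [exists h in 'N_P(f @: Q), [forall x in Q, f (x ^ g) == f x ^ h]]].

Definition saturated (gT : finGroupType) (p : nat) (P : {group gT}) (F : fsys gT) :=
  [/\ is_fusion_system P F,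
      forall Q : {group gT}, Q \subset P -> fully_normalized P F Q ->
        fully_centralized P F Q /\ p.-Sylow(AutF F Q) (AutP P Q)
    &
      forall (Q : {group gT}) (f : {ffun gT -> gT}), Q \subset P -> F Q f ->
        fully_centralized P F (f @: Q) ->
        exists2 g : {ffun gT -> gT}, F (Nphi P Q f) g & {in Q, g =1 f}].

Definition strongly_p_embedded (p : nat) (aT : finGroupType) (G : {set aT}) (H : {group aT}) :=
  [/\ H \subset G, p %| #|H|, ~~ (p %| #|G : H|), 1 < #|G : H|
    & forall x, x \in G :\: H -> ~~ (p %| #|H :&: H :^ x|)].

Definition essential (gT : finGroupType) (p : nat) (P : {group gT}) (F : fsys gT) (Q : {group gT}) :=
  [/\ Q \subset P, fully_normalized P F Q, Fcentric P F Q
    & exists H : {group coset_of (Inn Q)}, strongly_p_embedded p (OutF F Q) H].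

(* Aut_F(Q/Phi(Q)): the image of Aut_F(Q) in Aut(Q/Phi(Q)), via the action
   induced on the cosets of Phi(Q) by the natural action of Aut(Q) *)
Definition AutFquo (gT : finGroupType) (F : fsys gT) (Q : {group gT}) :
    {set {perm coset_of 'Phi(Q)}} :=
  actperm ([Aut Q] / 'Phi(Q))%act @* AutF F Q.

(* Main.v *)
Require Import Defs.
From HB Require Import structures.
From mathcomp Require Import all_boot all_fingroup all_solvable all_algebra.
From mathcomp Require Import mxrepresentation mxabelem.
Import GRing.Theory.
Set Implicit Arguments. Unset Strict Implicit. Unset Printing Implicit Defensive.
Local Open Scope group_scope.

Section GLmap.
Variables (p n' : nat).
Local Notation n := n'.+1.
Local Notation rV := 'rV['F_p]_n.
Local Notation V := [set: rV].

Lemma Aut_rV_add (s : {perm rV}) u v : s \in Aut V -> s (u + v)%R = (s u + s v)%R.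
Proof. by move=> As; apply: (morphicP (Aut_morphic As)); rewrite inE. Qed.

Lemma Aut_rV_0 (s : {perm rV}) : s \in Aut V -> s 0%R = 0%R.
Proof.
move=> As; have := Aut_rV_add 0%R 0%R As; rewrite GRing.addr0.
by move/(congr1 (fun w => w - s 0%R)%R); rewrite GRing.subrr GRing.addrK.
Qed.

Lemma Aut_rV_natmul (s : {perm rV}) u k : s \in Aut V -> s (u *+ k)%R = (s u *+ k)%R.
Proof.
move=> As; elim: k => [|k IH]; first by rewrite !GRing.mulr0n Aut_rV_0.
by rewrite !GRing.mulrS Aut_rV_add // IH.
Qed.

Lemma Aut_rV_scale (s : {perm rV}) (c : 'F_p) u : s \in Aut V -> s (c *: u)%R = (c *: s u)%R.
Proof.
move=> As; rewrite -[c]natr_Zp !scaler_nat; exact: Aut_rV_natmul.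
Qed.

Definition rVmx (s : {perm rV}) : 'M['F_p]_n := lin1_mx (fun v => s v).

Lemma rVmxE (s : {perm rV}) u : s \in Aut V -> (u *m rVmx s)%R = s u.
Proof.
move=> As; rewrite /rVmx.
rewrite [u in RHS]matrix_sum_delta big_ord1.
have sum_s (I : Type) (r : seq I) (P : pred I) (F : I -> rV) :
    s (\sum_(i <- r | P i) F i)%R = (\sum_(i <- r | P i) s (F i))%R.
  by apply: (big_morph s) => [x y|]; [apply: Aut_rV_add | apply: Aut_rV_0].
rewrite sum_s; apply/rowP=> i.
rewrite mxE summxE; apply: eq_bigr => j _; rewrite Aut_rV_scale // !mxE.
by [].
Qed.


Lemma rVmx_repr : mx_repr (Aut V) rVmx.
Proof.
split.
  apply/row_matrixP=> i; rewrite !rowE rVmxE ?group1 // perm1 mulmx1 //.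
move=> x y Ax Ay; apply/row_matrixP=> i.
by rewrite !rowE mulmxA !rVmxE ?groupM // permM.
Qed.

Canonical rVrepr := MxRepresentation rVmx_repr.

Definition rVGL := reprGLm rVrepr.

Lemma rVGL_injm : 'injm rVGL.
Proof.
rewrite ker_reprGLm; apply/subsetP=> s /rkerP[As s1]; rewrite inE.
apply/eqP/permP=> u; rewrite perm1 -rVmxE //.
by rewrite [rVmx s]s1 mulmx1.
Qed.

Lemma rVGLE s u : s \in Aut V -> (u *m val (rVGL s))%R = s u.
Proof. by move=> As; rewrite val_reprGLm // rVmxE. Qed.

End GLmap.

Section Mx.
Local Open Scope ring_scope.
Lemma unipotent_exp (p n' : nat) (A : 'M['F_p]_n'.+1) k e :
  prime p -> A ^+ (p ^ k) = 1 -> (n'.+1 <= p ^ e)%N -> A ^+ (p ^ e) = 1.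
Proof.
move=> pr_p Ak le_ne.
have chP : (p \in [pchar {poly 'F_p}]) by rewrite pchar_poly pchar_Fp.
have pnatP m : [pchar {poly 'F_p}].-nat (p ^ m)%N.
  by rewrite (eq_pnat _ (pcharf_eq chP)) pnatX pnat_id // orbT.
have polyE m : ('X - 1) ^+ (p ^ m) = 'X^(p ^ m) - 1 :> {poly 'F_p}.
  by rewrite exprDn_pchar // exprNn_pchar // expr1n.
set N := A - 1.
have NE m : N ^+ (p ^ m) = A ^+ (p ^ m) - 1.
  have -> : N = horner_mx A ('X - 1) by rewrite rmorphB /= horner_mx_X rmorph1.
  by rewrite -rmorphXn /= polyE rmorphB /= rmorphXn /= horner_mx_X rmorph1.
have Nk : N ^+ (p ^ k) = 0 by rewrite NE Ak subrr.
have dvdm : mxminpoly N %| ('X - 0%:P) ^+ (p ^ k).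
  by rewrite subr0 dvd_mxminpoly rmorphXn /= horner_mx_X Nk.
have [j _ eqj] := dvdp_exp_XsubCP dvdm.
have lejn : (j <= n'.+1)%N.
  have : (size (('X - 0%:P) ^+ j : {poly 'F_p}) <= n'.+2)%N.
    rewrite -(eqp_size eqj) -(size_char_poly N); apply: dvdp_leq.
      by rewrite monic_neq0 // char_poly_monic.
    exact: mxminpoly_dvd_char.
  by rewrite subr0 size_polyXn.
have Nj : N ^+ j = 0.
  have : mxminpoly N %| ('X - 0%:P) ^+ j by rewrite -(eqp_dvdr _ eqj) dvdpp.
  by rewrite subr0 dvd_mxminpoly rmorphXn /= horner_mx_X => /eqP.
apply/eqP; rewrite -subr_eq0 -NE -(subnKC (leq_trans lejn le_ne)) exprD Nj mul0r //.
Qed.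

Local Open Scope group_scope.


Lemma GL_pgroup_exponent p n' (K : {group {'GL_n'.+1['F_p]}}) :
  prime p -> p.-group K -> (exponent K <= p ^ up_log p n'.+1)%N.
Proof.
move=> pr_p pK; apply: dvdn_leq; first by rewrite expn_gt0 prime_gt0.
apply/exponentP=> g Kg.
have [k ok] := p_natP (mem_p_elt pK Kg).
apply: val_inj; rewrite FinRing.val_unitX /=.
apply: (@unipotent_exp p n' _ k) => //; last exact: up_logP (prime_gt1 pr_p).
by rewrite -FinRing.val_unitX -ok expg_order.
Qed.

Lemma GL_pgroup_card p n (K : {group {'GL_n['F_p]}}) :
  prime p -> p.-group K -> (#|K| <= p ^ 'C(n, 2))%N.
Proof.
move=> pr_p pK; rewrite (card_pgroup pK) leq_exp2l ?prime_gt1 //.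
rewrite -(logn_card_GL_p n pr_p); apply: dvdn_leq_log; first exact: cardG_gt0.
exact: cardSg (subsetT _).
Qed.

End Mx.

Lemma ucn_lcn_comm j : forall (gT : finGroupType) (G : {group gT}) i,
  [~: 'Z_(i + j.+1)(G), 'L_j.+1(G)] \subset 'Z_i(G).
Proof.
elim: j => [|j IH] gT G i; first by rewrite addn1; apply: ucn_comm.
have T (hT : finGroupType) (H : {group hT}) : [~: 'Z_j.+2(H), 'L_j.+2(H)] \subset [1].
  rewrite lcnSn commGC; apply/trivgP; apply: three_subgroup.
    apply/trivgP; rewrite -(ucn0 H); apply: subset_trans (IH hT H 0); rewrite add0n.
    by apply: commSg; rewrite commGC; apply: ucn_comm.
  apply/trivgP; rewrite -(ucn0 H); apply: subset_trans (ucn_comm 0 H).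
  by apply: commSg; rewrite -(add1n j.+1); apply: IH.
have nZG : G \subset 'N('Z_i(G)) := ucn_norm i G.
have sRG : [~: 'Z_(i + j.+2)(G), 'L_j.+2(G)] \subset G.
  by rewrite comm_subG ?ucn_sub ?lcn_sub.
rewrite -quotient_sub1 ?(subset_trans sRG) //.
rewrite quotientR ?(subset_trans (ucn_sub _ _)) ?(subset_trans (lcn_sub _ _)) //.
rewrite addnC quotient_ucn_add.
have eL := morphim_lcn (coset_morphism [group of 'Z_i(G)]) j.+2 nZG.
by have := T _ (G / 'Z_i(G))%G; rewrite -eL.
Qed.

Lemma V_sub_ucn (gT : finGroupType) p (M V : {group gT}) :
  prime p -> p.-group M -> V <| M -> V \subset 'Z_(logn p #|V|)(M).
Proof.
move=> pr_p pM nsVM; have [sVM nVM] := andP nsVM.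
have pV := pgroupS sVM pM.
have step i : ~~ (V \subset 'Z_i.+1(M)) ->
    logn p #|V :&: 'Z_i(M)| < logn p #|V :&: 'Z_i.+1(M)|.
  move=> nVZ; have nVZi : ~~ (V \subset 'Z_i(M)).
    by apply: contra nVZ => sVZ; apply: subset_trans sVZ (ucn_subS _ _).
  have nZM : M \subset 'N('Z_i(M)) := ucn_norm i M.
  have nilM : nilpotent (M / 'Z_i(M)) by apply: pgroup_nil (quotient_pgroup _ pM).
  have ntV : V / 'Z_i(M) != 1.
    by rewrite -subG1 quotient_sub1 //; exact: subset_trans sVM nZM.
  have := meet_center_nil nilM (quotient_normal _ nsVM) ntV.
  case/trivgPn=> w /setIP[/morphimP[v Nv Vv ->] Zw] ntw.
  have Zv : v \in 'Z_i.+1(M).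
    by rewrite ucnSn; apply: mem_morphpre.
  have nZv : v \notin 'Z_i(M).
    apply/negP => Zv'; case/eqP: ntw; exact: coset_id.
  have lt : V :&: 'Z_i(M) \proper V :&: 'Z_i.+1(M).
    rewrite properEneq setIS ?ucn_subS // andbT; apply/eqP=> eqVZ.
    have : v \in V :&: 'Z_i.+1(M) by rewrite inE Vv.
    by rewrite -eqVZ inE (negPf nZv) andbF.
  have pA : p.-group (V :&: 'Z_i(M)) := pgroupS (subsetIl _ _) pV.
  have pB : p.-group (V :&: 'Z_i.+1(M)) := pgroupS (subsetIl _ _) pV.
  have h := proper_card lt.
  by rewrite (card_pgroup pA) (card_pgroup pB) ltn_exp2l ?prime_gt1 in h.
have key i : (V \subset 'Z_i(M)) || (i <= logn p #|V :&: 'Z_i(M)|).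
  elim: i => [|i IH]; first by rewrite orbT.
  case: (boolP (V \subset 'Z_i.+1(M))) => //= nVZ.
  have nVZi : ~~ (V \subset 'Z_i(M)).
    by apply: contra nVZ => sVZ; apply: subset_trans sVZ (ucn_subS _ _).
  rewrite (negPf nVZi) /= in IH; exact: leq_ltn_trans IH (step i nVZ).
set n := logn p #|V|; case/orP: (key n) => // le.
have pA : p.-group (V :&: 'Z_n(M)) := pgroupS (subsetIl _ _) pV.
have : #|V| <= #|V :&: 'Z_n(M)|.
  by rewrite {1}(card_pgroup pV) (card_pgroup pA) leq_exp2l ?prime_gt1.
move=> leV; have : V :&: 'Z_n(M) == V by rewrite eqEcard subsetIl leV.
by move/eqP/setIidPl.
Qed.

Lemma spe_Op (aT : finGroupType) p (G H : {group aT}) :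
  prime p -> strongly_p_embedded p G H -> 'O_p(G) = 1.
Proof.
move=> pr_p [sHG pH npGH ltGH Hx].
have [S sylS] := Sylow_exists p H.
have sSH := pHall_sub sylS.
have sylSG : p.-Sylow(G) S.
  rewrite /pHall (subset_trans sSH sHG) (pHall_pgroup sylS) /=.
  rewrite -(Lagrange_index sHG sSH) pnatM p'natE // npGH /=.
  by case/and3P: sylS.
have [x /setDP[Gx nHx]] : exists x, x \in G :\: H.
  apply/set0Pn; rewrite setD_eq0; apply: contraTN ltGH => sGH.
  by rewrite -indexg_eq1 in sGH; rewrite (eqP sGH).
have sOS := pcore_sub_Hall sylSG.
have nOG := normal_norm (pcore_normal p G).
have sOH : 'O_p(G) \subset H :&: H :^ x.
  rewrite subsetI (subset_trans sOS sSH) /=.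
  rewrite -(normP (subsetP nOG x Gx)) conjSg; exact: subset_trans sOS sSH.
apply/eqP; rewrite trivg_card1; apply/eqP; apply: (pnat_1 (pcore_pgroup _ _)).
apply: pnat_dvd (cardSg sOH) _; rewrite p'natE //; apply: Hx; by rewrite inE Gx nHx.
Qed.

Section S.
Variables (gT : finGroupType) (p : nat) (P : {group gT}) (F : fsys gT) (Q : {group gT}).
Hypothesis pr_p : prime p.
Hypothesis pP : p.-group P.
Hypothesis satF : saturated p P F.
Hypothesis essQ : essential p P F Q.

Let fsF : is_fusion_system P F. Proof. by case: satF. Qed.
Let sQP : Q \subset P. Proof. by case: essQ. Qed.

Lemma AutF_sub : AutF F Q \subset Aut Q.
Proof. by apply/subsetP=> a; rewrite inE => /andP[]. Qed.

Lemma Fext R (f g : {ffun gT -> gT}) : F R f -> {in R, f =1 g} -> F R g.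
Proof. exact: (fs_ext fsF). Qed.

Lemma AutFP a : (a \in AutF F Q) = (a \in Aut Q) && F Q [ffun x => a x].
Proof. by rewrite /AutF in_set. Qed.

Lemma AutF_group_set : group_set (AutF F Q).
Proof.
apply/group_setP; split.
  rewrite AutFP group1 /=; apply: (Fext (f := conjf 1)).
    by apply: (fs_conj fsF) => //; rewrite group1.
  by move=> x _; rewrite !ffunE conjg1 perm1.
move=> a b; rewrite !AutFP => /andP[Aa Fa] /andP[Ab Fb]; rewrite groupM //=.
have := fs_comp fsF Fa Fb.
have -> : [ffun x => a x] @: Q \subset Q.
  apply/subsetP=> _ /imsetP[x Qx ->]; rewrite ffunE; exact: Aut_closed.
move/(_ isT) => H; apply: (Fext H) => x _; by rewrite !ffunE permM.
Qed.
Canonical AutF_group := group AutF_group_set.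


Lemma conj_autF y : y \in 'N_P(Q) -> conj_aut Q y \in AutF F Q.
Proof.
case/setIP=> Py Ny; rewrite AutFP Aut_aut /=.
apply: (Fext (f := conjf y)); first exact: (fs_conj fsF).
by move=> x Qx; rewrite !ffunE norm_conj_autE.
Qed.

Lemma AutP_sub : AutP P Q \subset AutF F Q.
Proof.
apply/subsetP=> _ /morphimP[y Ny NPy ->]; exact: conj_autF.
Qed.

Lemma Inn_sub : Inn Q \subset AutF F Q.
Proof.
apply/subsetP=> _ /morphimP[y Ny Qy ->]; apply: conj_autF.
by rewrite inE (subsetP sQP) ?Ny.
Qed.

Local Notation Phi := 'Phi(Q).
Local Notation to := ([Aut Q] / 'Phi(Q))%act.
Local Notation rho := (actperm to).

Lemma Aut_qdom : Aut Q \subset qact_dom [Aut Q] Phi.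
Proof.
rewrite qact_domE ?Phi_sub //; apply: acts_char => //; exact: Phi_char.
Qed.

Lemma AutF_qdom : AutF F Q \subset qact_dom [Aut Q] Phi.
Proof. exact: subset_trans AutF_sub Aut_qdom. Qed.

Lemma rhoE a x : a \in Aut Q -> x \in 'N(Phi) -> rho a (coset Phi x) = coset Phi (a x).
Proof.
move=> Aa Nx; rewrite actpermE qactE //; exact: (subsetP Aut_qdom).
Qed.

Let nQPhi : Q \subset 'N(Phi). Proof. exact: normal_norm (Phi_normal Q). Qed.

Lemma ker_rhoP a : a \in Aut Q ->
  reflect (forall x, x \in Q -> coset Phi (a x) = coset Phi x) (a \in 'ker rho).
Proof.
move=> Aa; have Da := subsetP Aut_qdom a Aa.
apply: (iffP (kerP _ Da)) => [r1 x Qx | H].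
  by rewrite -rhoE ?(subsetP nQPhi) // r1 perm1.
apply/permP=> c; rewrite perm1; case: (cosetP c) => x Nx ->.
rewrite rhoE //; case Qx: (x \in Q); first exact: H.
by rewrite (out_Aut Aa) ?Qx.
Qed.

Lemma Aut_fix_group_set a : a \in Aut Q -> group_set [set y in Q | a y == y].
Proof.
move=> Aa; apply/group_setP; split.
  by rewrite inE group1 -{1}(autmE Aa) morph1 eqxx.
move=> x y; rewrite !inE => /andP[Qx /eqP ax] /andP[Qy /eqP ay].
by rewrite groupM // -{1}(autmE Aa) morphM //= (autmE Aa) ax ay.
Qed.

Lemma burnside : p.-group ('ker_(Aut Q) rho).
Proof.
apply/pgroupP=> q pr_q qd; have [a Ka oa] := Cauchy pr_q qd.
case/setIP: Ka => Aa /(ker_rhoP Aa) cosa.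
apply/idPn => nqp.
suff a1 : a = 1 by rewrite a1 order1 in oa; rewrite -oa in pr_q.
have pPhi : p.-group Phi by apply: pgroupS pP; exact: subset_trans (Phi_sub Q) sQP.
have fixc x : x \in Q -> exists2 y, y \in Phi :* x & a y = y.
  move=> Qx; have Nx := subsetP nQPhi x Qx.
  have actS : [acts <[a]>, on Phi :* x | 'P].
    rewrite cycle_subG; apply/astabsP=> y; rewrite /= apermE.
    case Qy: (y \in Q); last by rewrite (out_Aut Aa) ?Qy.
    have Nay : a y \in 'N(Phi) by rewrite (subsetP nQPhi) ?Aut_closed.
    have Ny := subsetP nQPhi y Qy.
    apply/(rcoset_kercosetP Nay Nx)/(rcoset_kercosetP Ny Nx); by rewrite cosa.
  have qa : q.-group <[a]> by rewrite /pgroup -orderE oa pnat_id.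
  have := pgroup_fix_mod qa actS; rewrite card_rcoset.
  case: (set_0Vmem 'Fix_(Phi :* x | 'P)(<[a]>)) => [-> | [y]].
    rewrite cards0 mod0n => /eqP qPhi.
    by case/negP: nqp; apply: (pgroupP pPhi).
  case/setIP=> Sy /afixP/(_ a (cycle_id a)); rewrite /= apermE => ay _.
  by exists y.
pose Sf := group (Aut_fix_group_set Aa).
have defQ : Phi <*> Sf = Q.
  apply/eqP; rewrite eqEsubset join_subG Phi_sub.
  rewrite (_ : (Sf : {set gT}) \subset Q) /=; last first.
    by apply/subsetP=> y; rewrite inE => /andP[].
  apply/subsetP=> x Qx; have [y /rcosetP[z Phz ->] ayz] := fixc x Qx.
  have Qz := subsetP (Phi_sub Q) z Phz.
  have Sy : z * x \in Sf by rewrite inE groupM // ayz eqxx.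
  have -> : x = z^-1 * (z * x) by rewrite mulKg.
  apply: groupM; first by apply: (subsetP (joing_subl _ _)); rewrite groupV.
  exact: (subsetP (joing_subr _ _)).
have := Phi_nongen defQ; rewrite genGid => eqS.
apply: (eq_Aut Aa (group1 _)) => x Qx; rewrite perm1.
by move: Qx; rewrite -eqS inE => /andP[_ /eqP].
Qed.
Lemma Inn_normal : Inn Q <| Aut Q.
Proof.
rewrite /normal Aut_conj_aut; apply/subsetP=> a Aa; rewrite inE.
apply/subsetP=> _ /imsetP[s /morphimP[y Ny Qy ->] ->].
have Qay : a y \in Q by rewrite Aut_closed.
have -> : conj_aut Q y ^ a = conj_aut Q (a y).
  apply: (eq_Aut (groupJ _ Aa) (Aut_aut _ _)); first exact: Aut_aut.
  move=> x Qx; have Qax : a^-1 x \in Q by rewrite Aut_closed ?groupV.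
  rewrite conjgE !permM conj_autE // ?conj_autE //.
  rewrite -(autmE Aa) morphJ // (autmE Aa); congr (_ ^ _).
  by rewrite /= (autmE Aa) permKV.
apply: mem_morphim => //; exact: (subsetP (normG Q)).
Qed.

Lemma AutF_nInn : AutF F Q \subset 'N(Inn Q).
Proof. exact: subset_trans AutF_sub (normal_norm Inn_normal). Qed.

Let pQ : p.-group Q. Proof. exact: pgroupS pP. Qed.

Lemma Inn_ker : Inn Q \subset 'ker rho.
Proof.
apply/subsetP=> _ /morphimP[y Ny Qy ->].
have cQb : abelian (Q / Phi) := abelem_abelian (Phi_quotient_abelem pQ).
apply/(ker_rhoP (Aut_aut _ _)) => x Qx; rewrite conj_autE //.
rewrite morphJ ?(subsetP nQPhi) //; apply/conjg_fixP/commgP.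
by apply: (centsP cQb); apply: mem_quotient.
Qed.

Lemma ker_AutF : 'ker_(AutF F Q) rho = Inn Q.
Proof.
apply/eqP; rewrite eqEsubset andbC subsetI Inn_sub Inn_ker /=.
have sKN : 'ker_(AutF F Q) rho \subset 'N(Inn Q).
  exact: subset_trans (subsetIl _ _) AutF_nInn.
rewrite -quotient_sub1 //.
have [_ _ _ [H speH]] := essQ.
rewrite -(spe_Op pr_p speH); apply: pcore_max.
  apply: quotient_pgroup; apply: pgroupS burnside.
  exact: setSI AutF_sub.
apply: quotient_normal.
have := ker_normal (restrm AutF_qdom rho); rewrite ker_restrm //.
Qed.

Theorem part1 : OutF F Q \isog AutFquo F Q.
Proof.
rewrite /OutF /AutFquo -ker_AutF.
exact: first_isog_loc AutF_qdom.
Qed.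
Lemma Q_neq1 : Q :!=: 1.
Proof.
apply/negP=> /eqP Q1; have [_ _ _ [H [sHO pH _ _ _]]] := essQ.
have sA1 : AutF F Q \subset [1] by rewrite -(Aut1 gT) -Q1 AutF_sub.
have : OutF F Q \subset [1] by move/(quotientS (Inn Q)): sA1; rewrite quotient1.
move/(subset_trans sHO)/trivgP => H1.
by move: pH; rewrite H1 cards1 dvdn1 => /eqP p1; move: pr_p; rewrite p1.
Qed.

Let pQb : p.-group (Q / Phi). Proof. exact: quotient_pgroup. Qed.

Lemma card_Qb : #|Q / Phi| = (p ^ logn p #|Q : Phi|)%N.
Proof. by rewrite {1}(card_pgroup pQb) card_quotient. Qed.

Lemma r_gt0 : 0 < logn p #|Q : Phi|.
Proof.
rewrite lt0n; apply: contraNneq Q_neq1 => r0.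
have : #|Q : Phi| = 1%N by rewrite -card_quotient // card_Qb r0.
move/eqP; rewrite indexg_eq1 => sQPhi.
have ePhi : Phi = Q by apply/eqP; rewrite eqEsubset Phi_sub.
have : Phi <*> [1 gT] = Q by rewrite joingG1 /= ePhi.
by move/Phi_nongen => e; rewrite -e genGid.
Qed.

Local Notation r := (logn p #|Q : Phi|).

Lemma Qb_rV : (Q / Phi) \isog [set: 'rV['F_p]_(r.-1.+1)].
Proof.
rewrite (isog_abelem_card _ (Phi_quotient_abelem pQ)) mx_Fp_abelem //=.
by rewrite cardsT card_mx card_Fp // mul1n prednK ?r_gt0 // card_Qb eqxx.
Qed.

Lemma AutFquo_sub : AutFquo F Q \subset Aut (Q / Phi).
Proof.
rewrite /AutFquo; apply: subset_trans (morphimS _ AutF_qdom) _.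
exact: im_actperm_Aut.
Qed.

Lemma to_GL (B : {group {perm coset_of Phi}}) : B \subset Aut (Q / Phi) ->
  exists K : {group {'GL_r['F_p]}}, B \isog K.
Proof.
move=> sBA; have /isogP[f injf imf] := Qb_rV.
pose g := Aut_isom injf (subxx (Q / Phi)).
have im_g : g @* Aut (Q / Phi) = Aut [set: 'rV['F_p]_(r.-1.+1)].
  by rewrite im_Aut_isom imf.
exists (@rVGL p r.-1 @* (g @* B))%G.
apply: isog_trans (sub_isog sBA (injm_Aut_isom injf (subxx (Q / Phi)))) _.
apply: sub_isog; last exact: rVGL_injm.
have := morphimS g sBA; rewrite im_g; exact.
Qed.

Theorem part2 : exists K : {group {'GL_r['F_p]}}, AutFquo F Q \isog K.
Proof. exact: to_GL AutFquo_sub. Qed.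

Lemma centric_sub : 'C_P(Q) \subset Q.
Proof.
have [_ _ cQ _] := essQ; apply: cQ; apply/existsP; exists [ffun x => x].
apply/andP; split.
  apply: (Fext (f := conjf 1)); first by apply: (fs_conj fsF) => //; rewrite group1.
  by move=> x _; rewrite !ffunE conjg1.
by rewrite (@eq_imset _ _ _ id) ?imset_id // => x; rewrite ffunE.
Qed.

Let sNPN : 'N_P(Q) \subset 'N(Q). Proof. exact: subsetIr. Qed.

Lemma conj_aut_nInn x : x \in 'N_P(Q) -> conj_aut Q x \in 'N(Inn Q).
Proof.
move=> NPx; apply: (subsetP AutF_nInn); apply: (subsetP AutP_sub).
by apply: mem_morphim => //; apply: (subsetP sNPN).
Qed.

Definition theta x := coset (Inn Q) (conj_aut Q x).

Lemma thetaM : {in 'N_P(Q) &, {morph theta : x y / x * y}}.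
Proof.
move=> x y NPx NPy; rewrite /theta morphM ?(subsetP sNPN) //.
by rewrite morphM ?conj_aut_nInn.
Qed.
Canonical theta_morph := Morphism thetaM.

Lemma ker_theta : 'ker theta_morph = Q.
Proof.
apply/eqP; rewrite eqEsubset; apply/andP; split; last first.
  apply/subsetP=> y Qy; have NPy : y \in 'N_P(Q).
    by rewrite inE (subsetP sQP) // (subsetP (normG Q)).
  apply/kerP => //=; rewrite /theta coset_id //.
  by apply: mem_morphim => //; apply: (subsetP (normG Q)).
apply/subsetP=> x Kx; have NPx : x \in 'N_P(Q) := dom_ker Kx.
have thx : theta x = 1 := mker Kx.
have: conj_aut Q x \in Inn Q by apply: coset_idr; rewrite ?conj_aut_nInn.
case/morphimP=> y Ny Qy exy.
have NPy : y \in 'N_P(Q) by rewrite inE (subsetP sQP) // Ny.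
have Nx := subsetP sNPN x NPx.
have : x * y^-1 \in 'C_P(Q).
  rewrite inE groupM ?groupV ?(subsetP (subsetIl _ _) _ NPx) ?(subsetP sQP) //=.
  rewrite -ker_conj_aut; apply/kerP; first by rewrite groupM ?groupV.
  by rewrite morphM ?groupV // morphV //= exy mulgV.
move/(subsetP centric_sub) => Qxy.
by rewrite -(mulgKV y x) groupM.
Qed.

Lemma im_theta : theta_morph @* 'N_P(Q) = AutP P Q / Inn Q.
Proof.
rewrite morphimEdom /AutP /quotient morphimEsub ?(subset_trans AutP_sub AutF_nInn) //.
by rewrite morphimEsub // -imset_comp.
Qed.

Lemma X0_isog : 'N_P(Q) / Q \isog AutP P Q / Inn Q.
Proof. by have := first_isog theta_morph; rewrite ker_theta im_theta. Qed.

Lemma X0_GL : exists K : {group {'GL_r['F_p]}}, 'N_P(Q) / Q \isog K.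
Proof.
have /isogP[f injf imf] := part1.
have sOP : AutP P Q / Inn Q \subset OutF F Q := quotientS _ AutP_sub.
have sfA : f @* (AutP P Q / Inn Q) \subset Aut (Q / Phi).
  by apply: subset_trans (morphimS _ sOP) _; rewrite imf AutFquo_sub.
have [K isoK] := to_GL sfA.
exists K; apply: isog_trans X0_isog (isog_trans (sub_isog sOP injf) isoK).
Qed.

Let pX0 : p.-group ('N_P(Q) / Q).
Proof. by apply: quotient_pgroup; apply: pgroupS pP; apply: subsetIl. Qed.

Theorem part3 : (#|'N_P(Q) / Q| <= p ^ ((r * r.-1) %/ 2))%N.
Proof.
have [K isoK] := X0_GL; rewrite (card_isog isoK) divn2 -bin2.
by apply: GL_pgroup_card => //; rewrite -(isog_pgroup _ isoK).
Qed.

Theorem part5 : (exponent ('N_P(Q) / Q) <= p ^ up_log p r)%N.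
Proof.
have [K isoK] := X0_GL; rewrite (exponent_isog isoK).
have -> : up_log p r = up_log p r.-1.+1 by rewrite prednK ?r_gt0.
apply: GL_pgroup_exponent => //.
by rewrite -(isog_pgroup _ isoK).
Qed.

Lemma X0_gt1 : (1 < #|'N_P(Q) / Q|)%N.
Proof.
rewrite (card_isog X0_isog).
have [_ fn _ [H [sHO pH _ _ _]]] := essQ.
have [_ sylA] := (let: And3 _ s _ := satF in s) Q sQP fn.
have hall := quotient_pHall (subset_trans AutP_sub AutF_nInn) sylA.
rewrite (card_Hall hall) p_part_gt1 mem_primes pr_p cardG_gt0 /=.
exact: dvdn_trans pH (cardSg sHO).
Qed.

Theorem part6 : r = 2 -> #|'N_P(Q) / Q| = p.
Proof.
move=> r2; have eX := card_pgroup pX0; set k := logn p _ in eX.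
have h3 := part3; rewrite r2 eX leq_exp2l ?prime_gt1 // in h3.
have h1 := X0_gt1; rewrite eX in h1; rewrite eX.
by case: k h3 h1 {eX} => [|[|]] //; rewrite expn1.
Qed.

Lemma cent_V : 'C_('N_P(Q) / Phi)(Q / Phi) \subset Q / Phi.
Proof.
apply/subsetP=> _ /setIP[/morphimP[x Nx NPx ->] cVx].
have NQx := subsetP sNPN x NPx.
have kx : conj_aut Q x \in 'ker rho.
  apply/(ker_rhoP (Aut_aut _ _)) => y Qy; rewrite norm_conj_autE //.
  rewrite morphJ ?Nx ?(subsetP nQPhi y Qy) //; apply/conjg_fixP/commgP.
  by apply: commute_sym; apply: (centP cVx); apply: mem_quotient.
have : conj_aut Q x \in Inn Q by rewrite -ker_AutF inE conj_autF.
move=> Ix; have : x \in 'ker theta_morph.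
  by apply/kerP => //=; rewrite /theta coset_id.
by rewrite ker_theta => Qx; apply: mem_quotient.
Qed.

Theorem part4 : (nil_class ('N_P(Q) / Q) <= r.-1)%N.
Proof.
have nsQN : Q <| 'N_P(Q) by rewrite normal_subnorm.
have nsPhiN : Phi <| 'N_P(Q) := char_normal_trans (Phi_char Q) nsQN.
have sPhiQ := Phi_sub Q.
have nsVM : Q / Phi <| 'N_P(Q) / Phi := quotient_normal _ nsQN.
have pM : p.-group ('N_P(Q) / Phi).
  by apply: quotient_pgroup; apply: pgroupS pP; apply: subsetIl.
have sVZ : Q / Phi \subset 'Z_r('N_P(Q) / Phi).
  by have := V_sub_ucn pr_p pM nsVM; rewrite card_quotient.
have sLV : 'L_r('N_P(Q) / Phi) \subset Q / Phi.
  apply: subset_trans cent_V; rewrite subsetI lcn_sub /=.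
  have := ucn_lcn_comm r.-1 ('N_P(Q) / Phi)%G 0; rewrite add0n prednK ?r_gt0 // ucn0.
  move/(subset_trans (commSg _ sVZ))/trivgP/commG1P; rewrite centsC; exact.
rewrite -(isog_nil_class (third_isog sPhiQ nsPhiN nsQN)).
have nVM := normal_norm nsVM.
apply/lcn_nil_classP; first by apply: pgroup_nil (quotient_pgroup _ pM).
rewrite prednK ?r_gt0 // -morphim_lcn //; apply/trivgP.
by rewrite quotient_sub1 // (subset_trans (lcn_sub _ _) nVM).
Qed.

Theorem main_sec :
  [/\ OutF F Q \isog AutFquo F Q,
      (exists K : {group {'GL_r['F_p]}}, AutFquo F Q \isog K),
      (#|'N_P(Q) / Q| <= p ^ ((r * r.-1) %/ 2))%N,
      (nil_class ('N_P(Q) / Q) <= r.-1)%N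
    & [/\ (exponent ('N_P(Q) / Q) <= p ^ up_log p r)%N
        & r = 2 -> #|'N_P(Q) / Q| = p]].
Proof.
split; [exact: part1 | exact: part2 | exact: part3 | exact: part4 |].
by split; [exact: part5 | exact: part6].
Qed.

End S.

Theorem proposition2p2 (gT : finGroupType) (p : nat) (P : {group gT})
    (F : fsys gT) (Q : {group gT}) (r : nat) :
  prime p -> p.-group P -> saturated p P F -> essential p P F Q ->
  r = logn p #|Q : 'Phi(Q)| ->
  [/\ OutF F Q \isog AutFquo F Q,
      (exists K : {group {'GL_r['F_p]}}, AutFquo F Q \isog K),
      (#|'N_P(Q) / Q| <= p ^ ((r * r.-1) %/ 2))%N,
      (nil_class ('N_P(Q) / Q) <= r.-1)%N
    & [/\ (exponent ('N_P(Q) / Q) <= p ^ up_log p r)%N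
        & r = 2 -> #|'N_P(Q) / Q| = p]].
Proof. by move=> pr_p pP satF essQ ->; apply: main_sec. Qed.
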